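(* Let $\bar{\mathcal F}=\{\bar a^1,\bar b^1,\bar c^1,\bar d^1\}$ be the quadrangle of $Q$ with $\bar a^1=[1,0,0,0,0,0]$, $\bar b^1=[0,0,1,0,0,0]$, $\bar c^1=[0,1,0,0,0,0]$, $\bar d^1=[0,0,0,1,0,0]$ (so $\bar a^1\perp\bar b^1\perp\bar c^1\perp\bar d^1\perp\bar a^1$). Then $$I(\bar{\mathcal F})=\{[u,1/u,v,1/v,r,s]:\ u,v\in\mathbb F_q,\ uv\neq0,\ r,s\in\mathbb F_q,\ r^2+rs+\lambda s^2=1\},$$ and $|I(\bar{\mathcal F})|=(q-1)^2(q+1)$.
   Context: Let $q=2^n$, $V=V(6,q)$, and let $Q=Q^-(5,q)$ be the quadric of $\mathrm{PG}(V)$ with equation $f(x)=0$, where $f(x_1,\dots,x_6)=x_1x_2+x_3x_4+x_5^2+x_5x_6+\lambda x_6^2$ with $\lambda\in\mathbb F_q$, $\mathrm{Tr}(\lambda)=1$ ($\mathrm{Tr}$ the absolute trace $\mathbb F_q\to\mathbb F_2$). $Q$ is a generalized quadrangle of order $(q,q^2)$ whose lines are the totally singular lines. $\perp$ denotes orthogonality w.r.t. the bilinear form $\beta(x,y)=f(x+y)-f(x)-f(y)$; two distinct points of $Q$ are collinear in $Q$ iff they are orthogonal. A quadrangle of $Q$ is a set of four distinct points $a,b,c,d$ of $Q$ with $a\perp b\perp c\perp d\perp a$, $a\not\perp c$, $b\not\perp d$. For a point $p\notin Q$, a centric cube of $Q$ with center $p$ is a set of eight points $\{x_i^a: i=1,\dots,4,\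 a=1,2\}$ of $Q\setminus p^\perp$ such that $x_i^a$ and $x_j^b$ are collinear in $Q$ iff $i\neq j$ and $a\neq b$, and such that for each $i$ the points $p,x_i^1,x_i^2$ lie on a common projective line; the pairs $\{x_i^1,x_i^2\}$ are called opposite. A face of such a cube is a set of four of its points, one from each opposite pair, whose induced collinearity graph is a $4$-cycle. For a quadrangle $\mathcal F$ of $Q$, $I(\mathcal F)$ is the set of points $p\in\mathrm{PG}(V)\setminus Q$ with $p^\perp\cap\mathcal F=\emptyset$ such that $\mathcal F$ is a face of some centric cube of $Q$ with center $p$. *)

(* Defs.v *)
From HB Require Import structures.
From mathcomp Require Import all_boot all_order all_algebra all_fingroup all_field.
Set Implicit Arguments. Unset Strict Implicit. Unset Printing Implicit Defensive.
Import GRing.Theory.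
Local Open Scope ring_scope.

Section Quadric.
Variable F : finFieldType.

Notation vec := 'rV[F]_6.

(* coordinates x_1..x_6 are x (k-1) for k = 1..6 *)
Definition co (x : vec) (k : nat) : F := x ord0 (inord k).

Definition mkv (x1 x2 x3 x4 x5 x6 : F) : vec :=
  \row_(i < 6) [:: x1; x2; x3; x4; x5; x6]`_i.

(* absolute trace F_{2^n} -> F_2, as an element of F *)
Definition trace (n : nat) (l : F) : F := \sum_(i < n) l ^+ (2 ^ i).

Definition qf (lam : F) (x : vec) : F :=
  co x 0 * co x 1 + co x 2 * co x 3 + co x 4 ^+ 2 + co x 4 * co x 5
  + lam * co x 5 ^+ 2.

Definition bf (lam : F) (x y : vec) : F := qf lam (x + y) - qf lam x - qf lam y.

(* the projective point [x] (for x != 0): the set of nonzero multiples of x *)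
Definition pclass (x : vec) : {set vec} :=
  [set y : vec | [exists c : F, (c != 0) && (y == c *: x)]].

Definition coll (lam : F) (x y : vec) : bool :=
  (pclass x != pclass y) && (bf lam x y == 0).

(* centric cube with center p: the points x_i^a are x (i, a) *)
Definition centric_cube (lam : F) (p : vec) (x : {ffun 'I_4 * 'I_2 -> vec}) : bool :=
  [&& p != 0, qf lam p != 0,
   [forall k, [&& x k != 0, qf lam (x k) == 0 & bf lam p (x k) != 0]],
   [forall k, forall l, (k != l) ==> (pclass (x k) != pclass (x l))],
   [forall k, forall l, coll lam (x k) (x l) == ((k.1 != l.1) && (k.2 != l.2))] &
   [forall i : 'I_4, exists al : F * F * F,
      (al != (0, 0, 0)) &&
      (al.1.1 *: p + al.1.2 *: x (i, ord0) + al.2 *: x (i, ord_max) == 0)]].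

(* the choice s of one point from each opposite pair gives a face:
   induced collinearity graph is a 4-cycle *)
Definition is_face (lam : F) (x : {ffun 'I_4 * 'I_2 -> vec}) (s : {ffun 'I_4 -> 'I_2}) : bool :=
  [exists sg : {perm 'I_4},
    let y := fun k : 'I_4 => x (sg k, s (sg k)) in
    [&& coll lam (y 0%R) (y 1%R), coll lam (y 1%R) (y 2%R),
        coll lam (y 2%R) (y 3%R), coll lam (y 3%R) (y 0%R),
        ~~ coll lam (y 0%R) (y 2%R) & ~~ coll lam (y 1%R) (y 3%R)]].

Definition face_set (x : {ffun 'I_4 * 'I_2 -> vec}) (s : {ffun 'I_4 -> 'I_2}) : {set {set vec}} :=
  [set pclass (x (i, s i)) | i : 'I_4].

Definition Iset (lam : F) (a b c d : vec) : {set {set vec}} :=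
  [set P | [exists p : vec,
     [&& p != 0, P == pclass p, qf lam p != 0,
         bf lam p a != 0, bf lam p b != 0, bf lam p c != 0, bf lam p d != 0 &
         [exists x : {ffun 'I_4 * 'I_2 -> vec},
            centric_cube lam p x &&
            [exists s : {ffun 'I_4 -> 'I_2},
               is_face lam x s &&
               (face_set x s == [set pclass a; pclass b; pclass c; pclass d])]]]]].

Definition Idesc (lam : F) : {set {set vec}} :=
  [set P | [exists u : F, exists v : F, exists r : F, exists s : F,
     [&& u * v != 0, r ^+ 2 + r * s + lam * s ^+ 2 == 1 &
         P == pclass (mkv u u^-1 v v^-1 r s)]]].

End Quadric.

(* Main.v *)
Require Import Defs.
From HB Require Import structures.
From mathcomp Require Import all_boot all_order all_algebra all_fingroup all_field.
From mathcomp Require Import ring zify.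
From Stdlib Require Import Lia.
Import GRing.Theory.
Local Open Scope ring_scope.
Set Implicit Arguments. Unset Strict Implicit.


Lemma co_add (F : finFieldType) (x y : 'rV[F]_6) k : co (x + y) k = co x k + co y k.
Proof. by rewrite /co mxE. Qed.
Lemma co_scale (F : finFieldType) (c : F) (x : 'rV[F]_6) k : co (c *: x) k = c * co x k.
Proof. by rewrite /co mxE. Qed.
Lemma co_opp (F : finFieldType) (x : 'rV[F]_6) k : co (- x) k = - co x k.
Proof. by rewrite /co mxE. Qed.
Lemma co_0 (F : finFieldType) k : co (0 : 'rV[F]_6) k = 0.
Proof. by rewrite /co mxE. Qed.
Lemma co_mkv0 (F : finFieldType) (x0 x1 x2 x3 x4 x5 : F) : co (mkv x0 x1 x2 x3 x4 x5) 0 = x0.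
Proof. by rewrite /co /mkv !mxE !inordK. Qed.
Lemma co_mkv1 (F : finFieldType) (x0 x1 x2 x3 x4 x5 : F) : co (mkv x0 x1 x2 x3 x4 x5) 1 = x1.
Proof. by rewrite /co /mkv !mxE !inordK. Qed.
Lemma co_mkv2 (F : finFieldType) (x0 x1 x2 x3 x4 x5 : F) : co (mkv x0 x1 x2 x3 x4 x5) 2 = x2.
Proof. by rewrite /co /mkv !mxE !inordK. Qed.
Lemma co_mkv3 (F : finFieldType) (x0 x1 x2 x3 x4 x5 : F) : co (mkv x0 x1 x2 x3 x4 x5) 3 = x3.
Proof. by rewrite /co /mkv !mxE !inordK. Qed.
Lemma co_mkv4 (F : finFieldType) (x0 x1 x2 x3 x4 x5 : F) : co (mkv x0 x1 x2 x3 x4 x5) 4 = x4.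
Proof. by rewrite /co /mkv !mxE !inordK. Qed.
Lemma co_mkv5 (F : finFieldType) (x0 x1 x2 x3 x4 x5 : F) : co (mkv x0 x1 x2 x3 x4 x5) 5 = x5.
Proof. by rewrite /co /mkv !mxE !inordK. Qed.

Lemma vecP (F : finFieldType) (x y : 'rV[F]_6) :
  co x 0 = co y 0 -> co x 1 = co y 1 -> co x 2 = co y 2 ->
  co x 3 = co y 3 -> co x 4 = co y 4 -> co x 5 = co y 5 -> x = y.
Proof.
rewrite /co => h0 h1 h2 h3 h4 h5; apply/rowP => i.
case: i => [[|[|[|[|[|[|//]]]]]] Hi].
- by move: h0; rewrite (_ : inord 0 = Ordinal Hi) //; apply: val_inj; rewrite /= inordK.
- by move: h1; rewrite (_ : inord 1 = Ordinal Hi) //; apply: val_inj; rewrite /= inordK.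
- by move: h2; rewrite (_ : inord 2 = Ordinal Hi) //; apply: val_inj; rewrite /= inordK.
- by move: h3; rewrite (_ : inord 3 = Ordinal Hi) //; apply: val_inj; rewrite /= inordK.
- by move: h4; rewrite (_ : inord 4 = Ordinal Hi) //; apply: val_inj; rewrite /= inordK.
- by move: h5; rewrite (_ : inord 5 = Ordinal Hi) //; apply: val_inj; rewrite /= inordK.
Qed.

Lemma bfE (F : finFieldType) (h2 : (2 : F) = 0) lam (x y : 'rV[F]_6) :
  bf lam x y = co x 0 * co y 1 + co x 1 * co y 0 + co x 2 * co y 3 + co x 3 * co y 2
     + co x 4 * co y 5 + co x 5 * co y 4.
Proof.
rewrite /bf /qf !co_add.
set a0 := co x 0; set a1 := co x 1; set a2 := co x 2; set a3 := co x 3; set a4 := co x 4; set a5 := co x 5.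
set b0 := co y 0; set b1 := co y 1; set b2 := co y 2; set b3 := co y 3; set b4 := co y 4; set b5 := co y 5.
have -> : (a0 + b0) * (a1 + b1) + (a2 + b2) * (a3 + b3) + (a4 + b4) ^+ 2 + (a4 + b4) * (a5 + b5) +
  lam * (a5 + b5) ^+ 2 - (a0 * a1 + a2 * a3 + a4 ^+ 2 + a4 * a5 + lam * a5 ^+ 2) -
  (b0 * b1 + b2 * b3 + b4 ^+ 2 + b4 * b5 + lam * b5 ^+ 2) =
  a0 * b1 + a1 * b0 + a2 * b3 + a3 * b2 + a4 * b5 + a5 * b4 + 2 * (a4 * b4 + lam * a5 * b5) by ring.
by rewrite h2 mul0r addr0.
Qed.

Ltac coexp := rewrite ?co_add ?co_scale ?co_opp ?co_0.

Lemma bfC (F : finFieldType) lam (x y : 'rV[F]_6) : bf lam x y = bf lam y x.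
Proof. by rewrite /bf [x + y]addrC; ring. Qed.

Lemma bfDl (F : finFieldType) (h2 : (2 : F) = 0) lam (x y z : 'rV[F]_6) :
  bf lam (x + y) z = bf lam x z + bf lam y z.
Proof. rewrite !bfE //; coexp; ring. Qed.
Lemma bfZl (F : finFieldType) (h2 : (2 : F) = 0) lam c (x z : 'rV[F]_6) :
  bf lam (c *: x) z = c * bf lam x z.
Proof. rewrite !bfE //; coexp; ring. Qed.
Lemma bfDr (F : finFieldType) (h2 : (2 : F) = 0) lam (x y z : 'rV[F]_6) :
  bf lam z (x + y) = bf lam z x + bf lam z y.
Proof. rewrite !bfE //; coexp; ring. Qed.
Lemma bfZr (F : finFieldType) (h2 : (2 : F) = 0) lam c (x z : 'rV[F]_6) :
  bf lam z (c *: x) = c * bf lam z x.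
Proof. rewrite !bfE //; coexp; ring. Qed.
Lemma bfNr (F : finFieldType) (h2 : (2 : F) = 0) lam (x z : 'rV[F]_6) :
  bf lam z (- x) = - bf lam z x.
Proof. rewrite !bfE //; coexp; ring. Qed.
Lemma bfxx (F : finFieldType) (h2 : (2 : F) = 0) lam (x : 'rV[F]_6) : bf lam x x = 0.
Proof. rewrite !bfE //. ring: h2. Qed.
Lemma bf0r (F : finFieldType) (h2 : (2 : F) = 0) lam (x : 'rV[F]_6) : bf lam x 0 = 0.
Proof. rewrite !bfE //; coexp; ring. Qed.
Lemma qfD (F : finFieldType) lam (x y : 'rV[F]_6) : qf lam (x + y) = qf lam x + qf lam y + bf lam x y.
Proof. rewrite /bf; ring. Qed.
Lemma qfZ (F : finFieldType) lam c (x : 'rV[F]_6) : qf lam (c *: x) = c ^+ 2 * qf lam x.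
Proof. rewrite /qf; coexp; ring. Qed.

Definition refl (F : finFieldType) lam (p w : 'rV[F]_6) := w + (bf lam p w / qf lam p) *: p.

Lemma qf_refl (F : finFieldType) (h2 : (2 : F) = 0) lam (p w : 'rV[F]_6) :
  qf lam p != 0 -> qf lam (refl lam p w) = qf lam w.
Proof.
move=> hp; rewrite /refl qfD qfZ bfZr // (bfC _ w p).
set t := bf lam p w; set q := qf lam p.
have -> : (t / q) ^+ 2 * q = t / q * t by field.
ring: h2.
Qed.
Lemma bf_p_refl (F : finFieldType) (h2 : (2 : F) = 0) lam (p w : 'rV[F]_6) :
  bf lam p (refl lam p w) = bf lam p w.
Proof. by rewrite /refl bfDr // bfZr // bfxx // mulr0 addr0. Qed.
Lemma bf_refl_r (F : finFieldType) (h2 : (2 : F) = 0) lam (x p w : 'rV[F]_6) :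
  bf lam x (refl lam p w) = bf lam x w + bf lam p w / qf lam p * bf lam x p.
Proof. by rewrite /refl bfDr // bfZr. Qed.
Lemma bf_refl_refl (F : finFieldType) (h2 : (2 : F) = 0) lam (p v w : 'rV[F]_6) :
  qf lam p != 0 -> bf lam (refl lam p v) (refl lam p w) = bf lam v w.
Proof.
move=> hp; rewrite bf_refl_r // (bfC _ (refl lam p v) w) bf_refl_r // (bfC _ (refl lam p v) p) bf_p_refl //.
rewrite (bfC _ w v) (bfC _ w p); ring: h2.
Qed.

Lemma pclass_self (F : finFieldType) (x : 'rV[F]_6) : x \in pclass x.
Proof. rewrite inE; apply/existsP; exists 1; by rewrite oner_eq0 scale1r eqxx. Qed.

Lemma pclassP (F : finFieldType) (x y : 'rV[F]_6) :
  pclass x = pclass y -> exists2 c, c != 0 & x = c *: y.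
Proof.
move=> e; have := pclass_self x; rewrite e inE => /existsP [c /andP [hc /eqP ->]].
by exists c.
Qed.

Lemma pclassZ (F : finFieldType) (c : F) (x : 'rV[F]_6) : c != 0 -> pclass (c *: x) = pclass x.
Proof.
move=> hc; apply/setP => y; rewrite !inE; apply/existsP/existsP => [[d /andP [hd /eqP ->]]|[d /andP [hd /eqP ->]]].
- by exists (d * c); rewrite mulf_neq0 //= scalerA.
- exists (d / c); rewrite mulf_neq0 ?invr_eq0 //= scalerA divfK //.
Qed.

Lemma qf0 (F : finFieldType) lam : qf lam (0 : 'rV[F]_6) = 0.
Proof. by rewrite /qf !co_0; ring. Qed.
Lemma qfN (F : finFieldType) lam (x : 'rV[F]_6) : qf lam (- x) = qf lam x.
Proof. by rewrite /qf !co_opp; ring. Qed.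

Lemma key (F : finFieldType) (h2 : (2 : F) = 0) lam (p x y z : 'rV[F]_6) (a1 a2 a3 : F) :
  qf lam p != 0 -> qf lam y = 0 -> qf lam z = 0 -> y != 0 -> z != 0 -> pclass y != pclass z ->
  (a1, a2, a3) != (0, 0, 0) -> a1 *: p + a2 *: y + a3 *: z = 0 -> bf lam x z = 0 ->
  qf lam p * bf lam x y = bf lam p x * bf lam p y.
Proof.
move=> hp hy hz y0 z0 hyz ha E hxz.
have e3 : a3 *: z = - (a1 *: p + a2 *: y) by apply/eqP; rewrite -addr_eq0 addrC E.
have a3n : a3 != 0.
  apply: contraNneq ha => a30; move: e3; rewrite a30 scale0r => /eqP; rewrite eq_sym oppr_eq0 addr_eq0 => /eqP e.
  have : qf lam (a1 *: p) = qf lam (- (a2 *: y)) by rewrite e.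
  rewrite qfN !qfZ hy mulr0 => /eqP; rewrite mulf_eq0 (negbTE hp) orbF expf_eq0 /= => /eqP a10.
  move: e; rewrite a10 scale0r => /eqP; rewrite eq_sym oppr_eq0 scaler_eq0 (negbTE y0) orbF => /eqP ->.
  by [].
have E1 : a1 * (a1 * qf lam p + a2 * bf lam p y) = 0.
  have : qf lam (a3 *: z) = qf lam (- (a1 *: p + a2 *: y)) by rewrite e3.
  rewrite qfN qfZ hz mulr0 qfD !qfZ hy bfZl // bfZr // => E0; rewrite [RHS]E0; ring.
have E2 : a1 * bf lam x p + a2 * bf lam x y = 0.
  have : bf lam x (a3 *: z) = bf lam x (- (a1 *: p + a2 *: y)) by rewrite e3.
  rewrite bfZr // hxz mulr0 bfNr // bfDr // !bfZr // => /esym/eqP; rewrite oppr_eq0 => /eqP //.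
have a1n : a1 != 0.
  apply: contraNneq hyz => a10; move: e3; rewrite a10 scale0r add0r => e.
  have a2n : a2 != 0.
    apply: contraNneq z0 => a20; move: e; rewrite a20 scale0r oppr0 => /eqP.
    by rewrite scaler_eq0 (negbTE a3n).
  have -> : z = (- a2 / a3) *: y by rewrite -[z](scalerK a3n) e scalerN scalerA -scaleNr mulrC mulNr.
  rewrite pclassZ // mulf_neq0 ?oppr_eq0 ?invr_eq0 //.
have E1' : a1 * qf lam p + a2 * bf lam p y = 0 by move: E1 => /eqP; rewrite mulf_eq0 (negbTE a1n) /= => /eqP.
have a2n : a2 != 0.
  apply: contraNneq hp => a20; move: E1'; rewrite a20 mul0r addr0 => /eqP; rewrite mulf_eq0 (negbTE a1n) //.
apply: (mulfI a2n).
apply/eqP; rewrite -subr_eq0; apply/eqP.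
rewrite (bfC _ x p) in E2.
have -> : a2 * (qf lam p * bf lam x y) - a2 * (bf lam p x * bf lam p y) =
   qf lam p * (a1 * bf lam p x + a2 * bf lam x y) - bf lam p x * (a1 * qf lam p + a2 * bf lam p y) by ring.
by rewrite E2 E1' !mulr0 subr0.
Qed.

Lemma I2_cases (k : 'I_2) : k = ord0 \/ k = ord_max.
Proof. by case: k => [[|[|//]]] H; [left|right]; apply: val_inj. Qed.

Lemma pclass_neq_of_bf (F : finFieldType) (h2 : (2 : F) = 0) lam (x y : 'rV[F]_6) :
  bf lam x y != 0 -> pclass x != pclass y.
Proof.
apply: contra => /eqP /pclassP [c _ ->]; by rewrite bfZl // bfxx // mulr0.
Qed.

Lemma pair_rel (F : finFieldType) (h2 : (2 : F) = 0) lam (p e e' : 'rV[F]_6)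
  (x : {ffun 'I_4 * 'I_2 -> 'rV[F]_6}) (s : {ffun 'I_4 -> 'I_2}) :
  centric_cube lam p x -> pclass e \in face_set x s -> pclass e' \in face_set x s ->
  bf lam e e' != 0 -> qf lam p * bf lam e e' = bf lam p e * bf lam p e'.
Proof.
move=> cc /imsetP [i _ ei] /imsetP [j _ ej] hee.
move: cc => /andP [p0 /and5P [hp /forallP hpts /forallP hdist /forallP hcoll /forallP hdep]].
have [c1 c1n xi] := pclassP (esym ei).
have [c2 c2n xj] := pclassP (esym ej).
have hdiff := pclass_neq_of_bf h2 hee.
have ij : i != j by apply: contraNneq hdiff => ij; rewrite ei ej ij.
have collv : forall k l, coll lam (x k) (x l) = ((k.1 != l.1) && (k.2 != l.2)).
  by move=> k l; apply/eqP; move/forallP: (hcoll k) => /(_ l).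
have sij : s i = s j.
  apply/eqP; apply: contraNT hee => hs.
  have := collv (i, s i) (j, s j); rewrite /= ij hs /coll => /andP [_ /eqP].
  by rewrite xi xj bfZl // bfZr // => /eqP; rewrite !mulf_eq0 (negbTE c1n) (negbTE c2n) /= => /eqP ->.
have ptsv : forall k, [/\ x k != 0, qf lam (x k) = 0 & bf lam p (x k) != 0].
  by move=> k; have /and3P [h1 /eqP h2' h3] := hpts k; split.
have distv : forall k l, k != l -> pclass (x k) != pclass (x l).
  by move=> k l kl; move/forallP: (hdist k) => /(_ l) /implyP; apply.
suff : qf lam p * bf lam (x (i, s i)) (x (j, s j)) =
       bf lam p (x (i, s i)) * bf lam p (x (j, s j)).
  rewrite xi xj !bfZl // !bfZr // => h.
  apply: (mulfI (mulf_neq0 c1n c2n)).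
  have -> : c1 * c2 * (qf lam p * bf lam e e') = qf lam p * (c1 * (c2 * bf lam e e')) by ring.
  rewrite h; ring.
have [al /andP [aln /eqP ha]] := existsP (hdep j).
case: al aln ha => [[a1 a2] a3] aln ha /=.
case: (I2_cases (s j)) => sj.
- rewrite sij sj.
  apply: (key h2 (z := x (j, ord_max)) (a1 := a1) (a2 := a2) (a3 := a3)).
  + exact: hp.
  + by case: (ptsv (j, ord0)).
  + by case: (ptsv (j, ord_max)).
  + by case: (ptsv (j, ord0)).
  + by case: (ptsv (j, ord_max)).
  + by apply: distv; rewrite xpair_eqE eqxx.
  + exact: aln.
  + exact: ha.
  + have := collv (i, s i) (j, ord_max); rewrite /= ij sij sj /coll => /andP [_ /eqP] //.
- rewrite sij sj.
  apply: (key h2 (z := x (j, ord0)) (a1 := a1) (a2 := a3) (a3 := a2)).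
  + exact: hp.
  + by case: (ptsv (j, ord_max)).
  + by case: (ptsv (j, ord0)).
  + by case: (ptsv (j, ord_max)).
  + by case: (ptsv (j, ord0)).
  + by apply: distv; rewrite xpair_eqE eqxx.
  + by move: aln; apply: contra => /eqP [-> -> ->].
  + by rewrite -ha addrAC.
  + have := collv (i, s i) (j, ord0); rewrite /= ij sij sj /coll => /andP [_ /eqP] //.
Qed.

Lemma char2 (F : finFieldType) n : #|F| = (2 ^ n)%N -> (2 : F) = 0.
Proof. move=> oF; exact: (pcharf0 (card_finPcharP oF (isT : prime 2))). Qed.

Lemma n_pos (F : finFieldType) n : #|F| = (2 ^ n)%N -> (0 < n)%N.
Proof. move=> oF; have := finNzRing_gt1 F; rewrite oF; by case: n {oF}. Qed.

Lemma sqrtF (F : finFieldType) n : #|F| = (2 ^ n)%N -> forall y : F, exists c, c ^+ 2 = y.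
Proof.
move=> oF y; have n0 := n_pos oF.
exists (y ^+ (2 ^ n.-1)); rewrite -exprM -expnSr prednK // -oF; exact: expf_card.
Qed.

Lemma sq_inj (F : finFieldType) (h2 : (2 : F) = 0) (c d : F) : c ^+ 2 = d ^+ 2 -> c = d.
Proof.
move=> e; apply/eqP; rewrite -subr_eq0.
have : (c - d) ^+ 2 == 0.
  have -> : (c - d) ^+ 2 = c ^+ 2 - d ^+ 2 + 2 * (d ^+ 2 - c * d) by ring.
  by rewrite h2 mul0r addr0 e subrr.
by rewrite expf_eq0.
Qed.

Lemma opp2 (F : finFieldType) (h2 : (2 : F) = 0) (y : F) : - y = y.
Proof. apply/eqP; rewrite eq_sym -subr_eq0 opprK; have -> : y + y = 2 * y by ring. by rewrite h2 mul0r. Qed.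

Lemma forward_eqs (F : finFieldType) (h2 : (2 : F) = 0) lam (p : 'rV[F]_6)
  (x : {ffun 'I_4 * 'I_2 -> 'rV[F]_6}) (s : {ffun 'I_4 -> 'I_2}) :
  centric_cube lam p x ->
  face_set x s == [set pclass (mkv 1 0 0 0 0 0); pclass (mkv 0 0 1 0 0 0);
                        pclass (mkv 0 1 0 0 0 0); pclass (mkv 0 0 0 1 0 0)] ->
  qf lam p = co p 0 * co p 1 /\ qf lam p = co p 2 * co p 3.
Proof.
move=> cc /eqP fs; split.
- have := pair_rel h2 (e := mkv 1 0 0 0 0 0) (e' := mkv 0 1 0 0 0 0) (s := s) cc.
  rewrite fs !inE !eqxx !orbT /= !bfE // !co_mkv0 !co_mkv1 !co_mkv2 !co_mkv3 !co_mkv4 !co_mkv5.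
  move=> h; have := h isT isT; rewrite !(mulr0, mul0r, mulr1, addr0, add0r) oner_eq0 => /(_ isT) ->; ring.
- have := pair_rel h2 (e := mkv 0 0 1 0 0 0) (e' := mkv 0 0 0 1 0 0) (s := s) cc.
  rewrite fs !inE !eqxx !orbT /= !bfE // !co_mkv0 !co_mkv1 !co_mkv2 !co_mkv3 !co_mkv4 !co_mkv5.
  move=> h; have := h isT isT; rewrite !(mulr0, mul0r, mulr1, addr0, add0r) oner_eq0 => /(_ isT) ->; ring.
Qed.

Lemma Iset_sub (F : finFieldType) n (oF : #|F| = (2 ^ n)%N) lam (P : {set 'rV[F]_6}) :
  P \in Iset lam (mkv 1 0 0 0 0 0) (mkv 0 0 1 0 0 0) (mkv 0 1 0 0 0 0) (mkv 0 0 0 1 0 0) ->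
  P \in Idesc lam.
Proof.
have h2 := char2 oF.
rewrite inE => /existsP [p /and4P [p0 /eqP -> hp /and5P [_ _ _ _ /existsP [x /andP [cc /existsP [s /andP [_ fs]]]]]]].
have [e01 e23] := forward_eqs h2 cc fs.
have [c hc] := sqrtF oF (qf lam p)^-1.
have cn : c != 0 by apply: contraNneq hp => c0; move: hc; rewrite c0 expr0n /= => /esym/eqP; rewrite invr_eq0.
have hcq : c ^+ 2 * qf lam p = 1 by rewrite hc mulVf.
have p0n : co p 0 != 0 by apply: contraNneq hp => h; rewrite e01 h mul0r.
have p2n : co p 2 != 0 by apply: contraNneq hp => h; rewrite e23 h mul0r.
have cp0 : c * co p 0 != 0 by rewrite mulf_neq0.
have cp2 : c * co p 2 != 0 by rewrite mulf_neq0.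
rewrite inE; apply/existsP; exists (c * co p 0); apply/existsP; exists (c * co p 2).
apply/existsP; exists (c * co p 4); apply/existsP; exists (c * co p 5).
apply/and3P; split.
- by rewrite mulf_neq0.
- apply/eqP; rewrite -hcq.
  have : qf lam p = co p 0 * co p 1 + co p 2 * co p 3 + co p 4 ^+ 2 + co p 4 * co p 5 + lam * co p 5 ^+ 2 by [].
  rewrite -e01 -e23 => e.
  have -> : (c * co p 4) ^+ 2 + c * co p 4 * (c * co p 5) + lam * (c * co p 5) ^+ 2 =
    c ^+ 2 * (co p 4 ^+ 2 + co p 4 * co p 5 + lam * co p 5 ^+ 2) by ring.
  congr (_ * _).
  have -> : co p 4 ^+ 2 + co p 4 * co p 5 + lam * co p 5 ^+ 2 = qf lam p - qf lam p - qf lam p.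
    by rewrite [X in X - _ - _]e; ring.
  by rewrite subrr sub0r opp2.
- apply/eqP; rewrite -(pclassZ p cn); congr pclass.
  have i0 : (c * co p 0)^-1 = c * co p 1.
    apply: (mulfI cp0); rewrite mulfV //.
    by rewrite -hcq e01; ring.
  have i2 : (c * co p 2)^-1 = c * co p 3.
    apply: (mulfI cp2); rewrite mulfV //.
    by rewrite -hcq e23; ring.
  by apply: vecP; rewrite ?co_scale ?co_mkv0 ?co_mkv1 ?co_mkv2 ?co_mkv3 ?co_mkv4 ?co_mkv5 ?i0 ?i2.
Qed.

Definition wv (F : finFieldType) (i : 'I_4) : 'rV[F]_6 :=
  match val i with 0 => mkv 1 0 0 0 0 0 | 1 => mkv 0 0 1 0 0 0 | 2 => mkv 0 1 0 0 0 0 | _ => mkv 0 0 0 1 0 0 end.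
Definition lab (i : 'I_4) : 'I_2 := if odd i then ord_max else ord0.
Definition xc (F : finFieldType) lam (p : 'rV[F]_6) : {ffun 'I_4 * 'I_2 -> 'rV[F]_6} :=
  [ffun k => if k.2 == lab k.1 then wv F k.1 else refl lam p (wv F k.1)].

Lemma NZ (F : finFieldType) (h2 : (2 : F) = 0) lam (u v : F) (p : 'rV[F]_6) :
  u != 0 -> v != 0 -> qf lam p = 1 ->
  bf lam p (mkv 1 0 0 0 0 0) = u^-1 -> bf lam p (mkv 0 0 1 0 0 0) = v^-1 ->
  bf lam p (mkv 0 1 0 0 0 0) = u -> bf lam p (mkv 0 0 0 1 0 0) = v ->
  forall i j a b, (bf lam (xc lam p (i, a)) (xc lam p (j, b)) != 0) =
    ((i != j) && (a == b)) || ((i == j) && (a != b)).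
Proof.
move=> u0 v0 hq pa pb pc pd i j a b.
have hq0 : qf lam p != 0 by rewrite hq oner_eq0.
have h11 : (1 + 1 : F) = 0 by rewrite -h2.
rewrite !ffunE /=.
case: i => [[|[|[|[|//]]]] Hi]; case: j => [[|[|[|[|//]]]] Hj];
case: a => [[|[|//]] Ha]; case: b => [[|[|//]] Hb]; rewrite /wv /lab /=.
all: rewrite ?bf_refl_refl // ?(bfC _ (refl _ _ _)) ?bf_refl_r // ?hq ?divr1.
all: rewrite ?(bfC _ _ p) ?pa ?pb ?pc ?pd.
all: rewrite !bfE // !co_mkv0 !co_mkv1 !co_mkv2 !co_mkv3 !co_mkv4 !co_mkv5 !(mulr0, mul0r, mulr1, addr0, add0r).
all: try (rewrite ?mulfV ?mulVf // ?h11 ?eqxx ?oner_eq0 ?mulf_neq0 ?invr_eq0 //; done).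
Qed.



Lemma third (i j : 'I_4) : exists m : 'I_4, (m != i) && (m != j).
Proof.
case: i => [[|[|[|[|//]]]] Hi]; case: j => [[|[|[|[|//]]]] Hj];
  first [ by exists (@Ordinal 4 0 isT) | by exists (@Ordinal 4 1 isT) | by exists (@Ordinal 4 2 isT) ].
Qed.

Lemma distinct_xc (F : finFieldType) (h2 : (2 : F) = 0) lam (u v : F) (p : 'rV[F]_6) :
  u != 0 -> v != 0 -> qf lam p = 1 ->
  bf lam p (mkv 1 0 0 0 0 0) = u^-1 -> bf lam p (mkv 0 0 1 0 0 0) = v^-1 ->
  bf lam p (mkv 0 1 0 0 0 0) = u -> bf lam p (mkv 0 0 0 1 0 0) = v ->
  forall k l, k != l -> pclass (xc lam p k) != pclass (xc lam p l).
Proof.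
move=> u0 v0 hq pa pb pc pd [i a] [j b] kl.
have nz := NZ h2 u0 v0 hq pa pb pc pd.
case hA : (((i != j) && (a == b)) || ((i == j) && (a != b))).
  by apply: (pclass_neq_of_bf h2 (lam := lam)); rewrite nz hA.
have [ij ab] : i != j /\ a != b.
  move: kl hA; rewrite xpair_eqE; case: (i == j); case: (a == b) => //.
have [m /andP [mi mj]] := third i j.
apply/negP => /eqP /esym /pclassP [c cn e].
have h1 : bf lam (xc lam p (m, a)) (xc lam p (i, a)) != 0 by rewrite nz mi eqxx.
have h3 : bf lam (xc lam p (m, a)) (xc lam p (j, b)) == 0.
  by rewrite -[_ == 0]negbK nz mj (negbTE ab) /= (negbTE mj).
move: h3; rewrite e bfZr // mulf_eq0 (negbTE cn) /=; exact/negP.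
Qed.

Lemma coll_xc (F : finFieldType) (h2 : (2 : F) = 0) lam (u v : F) (p : 'rV[F]_6) :
  u != 0 -> v != 0 -> qf lam p = 1 ->
  bf lam p (mkv 1 0 0 0 0 0) = u^-1 -> bf lam p (mkv 0 0 1 0 0 0) = v^-1 ->
  bf lam p (mkv 0 1 0 0 0 0) = u -> bf lam p (mkv 0 0 0 1 0 0) = v ->
  forall k l, coll lam (xc lam p k) (xc lam p l) = (k.1 != l.1) && (k.2 != l.2).
Proof.
move=> u0 v0 hq pa pb pc pd k l.
have nz := NZ h2 u0 v0 hq pa pb pc pd.
have ds := distinct_xc h2 u0 v0 hq pa pb pc pd.
case: (eqVneq k l) => [->|kl]; first by rewrite /coll eqxx !eqxx.
rewrite /coll ds //=; case: k l kl => [i a] [j b]; rewrite xpair_eqE /=.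
rewrite -[bf _ _ _ == 0]negbK nz.
by case: (i == j); case: (a == b).
Qed.

Lemma wv_facts (F : finFieldType) (h2 : (2 : F) = 0) lam (u v : F) (p : 'rV[F]_6) :
  u != 0 -> v != 0 ->
  bf lam p (mkv 1 0 0 0 0 0) = u^-1 -> bf lam p (mkv 0 0 1 0 0 0) = v^-1 ->
  bf lam p (mkv 0 1 0 0 0 0) = u -> bf lam p (mkv 0 0 0 1 0 0) = v ->
  forall i, qf lam (wv F i) = 0 /\ bf lam p (wv F i) != 0.
Proof.
move=> u0 v0 pa pb pc pd i.
case: i => [[|[|[|[|//]]]] Hi]; rewrite /wv /= ?pa ?pb ?pc ?pd ?invr_eq0 ?u0 ?v0;
  split => //; rewrite /qf !co_mkv0 !co_mkv1 !co_mkv2 !co_mkv3 !co_mkv4 !co_mkv5; ring.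
Qed.

Lemma xc_sum (F : finFieldType) lam (p : 'rV[F]_6) i :
  xc lam p (i, ord0) + xc lam p (i, ord_max) = wv F i + refl lam p (wv F i).
Proof.
rewrite !ffunE /=; case: (I2_cases (lab i)) => ->; rewrite ?eqxx /=; [done | exact: addrC].
Qed.

Lemma nz_of_bf (F : finFieldType) (h2 : (2 : F) = 0) lam (p x : 'rV[F]_6) :
  bf lam p x != 0 -> x != 0.
Proof. by apply: contraNneq => ->; rewrite bf0r. Qed.

Lemma Idesc_sub (F : finFieldType) n (oF : #|F| = (2 ^ n)%N) lam (P : {set 'rV[F]_6}) :
  P \in Idesc lam ->
  P \in Iset lam (mkv 1 0 0 0 0 0) (mkv 0 0 1 0 0 0) (mkv 0 1 0 0 0 0) (mkv 0 0 0 1 0 0).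
Proof.
have h2 := char2 oF.
have h11 : (1 + 1 : F) = 0 by rewrite -h2.
rewrite inE => /existsP [u /existsP [v /existsP [r /existsP [s0 /and3P [uv /eqP hN /eqP ->]]]]].
have u0 : u != 0 by move: uv; rewrite mulf_eq0 negb_or => /andP [].
have v0 : v != 0 by move: uv; rewrite mulf_eq0 negb_or => /andP [].
set p := mkv u u^-1 v v^-1 r s0.
have hq : qf lam p = 1.
  by rewrite /qf /p !co_mkv0 !co_mkv1 !co_mkv2 !co_mkv3 !co_mkv4 !co_mkv5 !mulfV // h11 add0r.
have hq0 : qf lam p != 0 by rewrite hq oner_eq0.
have pE : forall x0 x1 x2 x3 x4 x5,
   bf lam p (mkv x0 x1 x2 x3 x4 x5) = u * x1 + u^-1 * x0 + v * x3 + v^-1 * x2 + r * x5 + s0 * x4.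
  by move=> *; rewrite bfE // /p !co_mkv0 !co_mkv1 !co_mkv2 !co_mkv3 !co_mkv4 !co_mkv5.
have pa : bf lam p (mkv 1 0 0 0 0 0) = u^-1 by rewrite pE; ring.
have pb : bf lam p (mkv 0 0 1 0 0 0) = v^-1 by rewrite pE; ring.
have pc : bf lam p (mkv 0 1 0 0 0 0) = u by rewrite pE; ring.
have pd : bf lam p (mkv 0 0 0 1 0 0) = v by rewrite pE; ring.
have p0 : p != 0.
  apply: contraNneq u0 => h; by rewrite -(co_mkv0 u u^-1 v v^-1 r s0) -/p h co_0.
have cx := coll_xc h2 u0 v0 hq pa pb pc pd.
have dx := distinct_xc h2 u0 v0 hq pa pb pc pd.
have wf := wv_facts h2 u0 v0 pa pb pc pd.
have E : forall z : 'rV[F]_6, z + z = 0 by move=> z; rewrite -mulr2n -scaler_nat h2 scale0r.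
rewrite inE; apply/existsP; exists p.
apply/and4P; split => //.
apply/and5P; split; rewrite ?pa ?pb ?pc ?pd ?invr_eq0 //.
apply/existsP; exists (xc lam p); apply/andP; split.
- apply/andP; split => //; apply/and5P; split => //.
  + apply/forallP => -[i a]; have [q0 b0] := wf i.
    have hb : bf lam p (xc lam p (i, a)) != 0.
      by rewrite ffunE /=; case: (a == lab i); rewrite ?bf_p_refl.
    rewrite hb (nz_of_bf h2 hb) /= andbT ffunE /=; case: (a == lab i); rewrite ?qf_refl // q0 //.
  + by apply/forallP => k; apply/forallP => l; apply/implyP; exact: dx.
  + by apply/forallP => k; apply/forallP => l; rewrite cx.
  + apply/forallP => i; apply/existsP; exists (bf lam p (wv F i) / qf lam p, 1, 1).
    rewrite /= xpair_eqE /= xpair_eqE oner_eq0 andbF /= !scale1r -addrA xc_sum /refl.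
    by rewrite addrC addrA -addrA addrA (E (wv F i)) add0r E.
- apply/existsP; exists [ffun i => lab i]; apply/andP; split.
    have cx' : forall i j a b, coll lam (xc lam p (i, a)) (xc lam p (j, b)) = (i != j) && (a != b) by move=> i j a b; rewrite cx.
  + apply/existsP; exists 1%g; rewrite /= !perm1 !cx' !ffunE.
    by [].
  + rewrite /face_set; apply/eqP/setP => Q; rewrite !inE.
    apply/imsetP/idP.
    * move=> [i _ ->]; rewrite !ffunE /= eqxx.
      by case: i => [[|[|[|[|//]]]] Hi]; rewrite /wv /= eqxx ?orbT.
    * move=> /orP [/orP [/orP [/eqP ->|/eqP ->]|/eqP ->]|/eqP ->].
      - by exists (@Ordinal 4 0 isT) => //; rewrite !ffunE.
      - by exists (@Ordinal 4 1 isT) => //; rewrite !ffunE.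
      - by exists (@Ordinal 4 2 isT) => //; rewrite !ffunE.
      - by exists (@Ordinal 4 3 isT) => //; rewrite !ffunE.
Qed.


Lemma frobX (F : finFieldType) (h2 : (2 : F) = 0) (a b : F) i :
  (a + b) ^+ (2 ^ i) = a ^+ (2 ^ i) + b ^+ (2 ^ i).
Proof.
elim: i => [|i IH]; first by rewrite !expr1.
by rewrite expnSr !exprM IH; ring: h2.
Qed.

Lemma trace_AS (F : finFieldType) n (oF : #|F| = (2 ^ n)%N) (t : F) :
  trace n (t ^+ 2 + t) = 0.
Proof.
have h2 := char2 oF.
rewrite /trace.
have -> : \sum_(i < n) (t ^+ 2 + t) ^+ (2 ^ i) =
          \sum_(i < n) (t ^+ (2 ^ i.+1) - t ^+ (2 ^ i)).
  apply: eq_bigr => i _; by rewrite frobX // -exprM -expnS opp2.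
rewrite -(big_mkord xpredT (fun i => t ^+ (2 ^ i.+1) - t ^+ (2 ^ i))) telescope_sumr //.
by rewrite -oF expf_card expn0 expr1 subrr.
Qed.

Lemma aniso (F : finFieldType) n (oF : #|F| = (2 ^ n)%N) lam (r s : F) :
  trace n lam = 1 -> r ^+ 2 + r * s + lam * s ^+ 2 = 0 -> r = 0 /\ s = 0.
Proof.
have h2 := char2 oF.
move=> htr hN.
have s0 : s = 0.
  apply/eqP; apply/negPn/negP => sn.
  have : lam = (r / s) ^+ 2 + r / s.
    apply: (mulfI (expf_neq0 2 sn)).
    have -> : s ^+ 2 * ((r / s) ^+ 2 + r / s) = r ^+ 2 + r * s by field.
    rewrite -[LHS]add0r -hN.
    have -> : r ^+ 2 + r * s + lam * s ^+ 2 + s ^+ 2 * lam = r ^+ 2 + r * s + 2 * (lam * s ^+ 2) by ring.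
    by rewrite h2 mul0r addr0.
  move=> e; move: htr; rewrite e trace_AS // => /eqP; rewrite eq_sym oner_eq0.
  done.
split => //; move: hN; rewrite s0 mulr0 expr0n /= mulr0 !addr0 => /eqP; rewrite expf_eq0 /= => /eqP //.
Qed.

Definition Nf (F : finFieldType) (lam : F) (rs : F * F) := rs.1 ^+ 2 + rs.1 * rs.2 + lam * rs.2 ^+ 2.

Lemma card_S1 (F : finFieldType) n (oF : #|F| = (2 ^ n)%N) lam :
  trace n lam = 1 -> #|[set rs : F * F | Nf lam rs == 1]| = (#|F| + 1)%N.
Proof.
move=> htr; have h2 := char2 oF.
set S1 := [set rs : F * F | Nf lam rs == 1].
pose Phi (w : F * (F * F)) := (w.1 * w.2.1, w.1 * w.2.2).
have NZ : forall c r s, Nf lam (c * r, c * s) = c ^+ 2 * Nf lam (r, s) by move=> *; rewrite /Nf /=; ring.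
have inj : {in setX [set~ 0] S1 &, injective Phi}.
  move=> [c [r s]] [c' [r' s']]; rewrite !inE /= => /andP [cn /eqP N1] /andP [cn' /eqP N1'] [e1 e2].
  have cc : c = c'.
    apply: (sq_inj h2); rewrite -[LHS]mulr1 -[RHS]mulr1 -{1}N1 -N1' -!NZ.
    by rewrite e1 e2.
  subst c'; congr (_, (_, _)); exact: (mulfI cn).
have img : Phi @: setX [set~ 0] S1 = [set~ (0, 0)].
  apply/setP => -[x y]; rewrite !inE; apply/imsetP/idP.
  - move=> [[c [r s]]]; rewrite !inE /= => /andP [cn /eqP N1] [-> ->].
    rewrite xpair_eqE !mulf_eq0 (negbTE cn) /=; apply/andP => -[/eqP r0 /eqP s0].
    by move: N1; rewrite r0 s0 /Nf /= expr0n /= !mulr0 !addr0 => /eqP; rewrite eq_sym oner_eq0.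
  - move=> nz.
    have tn : Nf lam (x, y) != 0.
      apply: contraNneq nz => e; have [x0 y0] := aniso oF htr e; by move: x0 y0 => /= -> ->.
    have [c hc] := sqrtF oF (Nf lam (x, y)).
    have cn : c != 0 by apply: contraNneq tn => c0; rewrite -hc c0 expr0n.
    exists (c, (x / c, y / c)).
      rewrite !inE /= cn /=; apply/eqP.
      apply: (mulfI (expf_neq0 2 cn)); rewrite -NZ mulr1 hc.
      by congr (Nf lam (_, _)); field.
    by rewrite /Phi /=; congr (_, _); field.
have := card_in_imset inj; rewrite img cardsX cardsC1 !cardsC1 card_prod /= => e.
have q1 : (1 < #|F|)%N := finNzRing_gt1 F.
apply/eqP; rewrite -(eqn_pmul2l (_ : 0 < #|F|.-1)%N); last by rewrite -ltnS prednK // ltnW.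
rewrite -e; apply/eqP.
move: q1; case: #|F| => [|[|q]] //= _.
nia.
Qed.


Lemma card_Idesc (F : finFieldType) n (oF : #|F| = (2 ^ n)%N) (lam : F) :
  trace n lam = 1 -> #|Idesc lam| = ((#|F| - 1) ^ 2 * (#|F| + 1))%N.
Proof.
move=> htr; have h2 := char2 oF.
set A := [set uv : F * F | uv.1 * uv.2 != 0].
set S1 := [set rs : F * F | Nf lam rs == 1].
pose g (w : (F * F) * (F * F)) :=
  pclass (mkv w.1.1 w.1.1^-1 w.1.2 w.1.2^-1 w.2.1 w.2.2).
have eI : Idesc lam = g @: setX A S1.
  apply/setP => P; rewrite inE; apply/idP/imsetP.
  - move=> /existsP [u /existsP [v /existsP [r /existsP [s /and3P [uv hN /eqP ->]]]]].
    by exists ((u, v), (r, s)) => //; rewrite !inE /= uv.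
  - move=> [[[u v] [r s]]]; rewrite !inE /= => /andP [uv hN] ->.
    apply/existsP; exists u; apply/existsP; exists v; apply/existsP; exists r; apply/existsP; exists s.
    by rewrite uv hN eqxx.
have inj : {in setX A S1 &, injective g}.
  move=> [[u v] [r s]] [[u' v'] [r' s']]; rewrite !inE /= => /andP [uv _] /andP [uv' _].
  move=> /pclassP [c cn e].
  have ec := fun k : nat => congr1 (fun z => co z k) e.
  have := ec 0%N; have := ec 1%N; have := ec 2%N; have := ec 3%N; have := ec 4%N; have := ec 5%N.
  rewrite /= !co_scale !co_mkv0 !co_mkv1 !co_mkv2 !co_mkv3 !co_mkv4 !co_mkv5.
  move=> e5 e4 e3 e2 e1 e0.
  have u0' : u' != 0 by move: uv'; rewrite mulf_eq0 negb_or => /andP [].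
  have c1 : c = 1.
    apply: (sq_inj h2); rewrite expr1n.
    have : u * u^-1 = 1.
      by rewrite mulfV //; move: uv; rewrite mulf_eq0 negb_or => /andP [].
    by rewrite e1 e0 => <-; field.
  by move: e0 e2 e4 e5; rewrite c1 !mul1r => -> -> -> ->.
rewrite eI (card_in_imset inj) cardsX (card_S1 oF htr).
have -> : A = setX [set~ (0 : F)] [set~ 0].
  by apply/setP => -[u v]; rewrite !inE mulf_eq0 negb_or.
by rewrite cardsX !cardsC1 mulnn subn1.
Qed.

Unset Implicit Arguments.

Theorem lemma3p6 (F : finFieldType) (n : nat) (lam : F) :
  #|F| = (2 ^ n)%N -> trace n lam = 1 ->
  let a := mkv 1 0 0 0 0 0 in
  let b := mkv 0 0 1 0 0 0 in
  let c := mkv 0 1 0 0 0 0 in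
  let d := mkv 0 0 0 1 0 0 in
  Iset lam a b c d = Idesc lam /\
  #|Iset lam a b c d| = ((#|F| - 1) ^ 2 * (#|F| + 1))%N.
Proof.
move=> oF htr /=.
have E : Iset lam (mkv 1 0 0 0 0 0) (mkv 0 0 1 0 0 0) (mkv 0 1 0 0 0 0) (mkv 0 0 0 1 0 0) = Idesc lam.
  apply/setP => P; apply/idP/idP; [exact: (Iset_sub oF) | exact: (Idesc_sub oF)].
split => //; rewrite E; exact (card_Idesc oF htr).
Qed.
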